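(* Let $X\in\mathbb{R}^{N\times D}$ with rows $x_n^\top$ have SVD $X^\top=U\mathrm{diag}(\lambda)V^\top+\bar U\mathrm{diag}(\bar\lambda)\bar V^\top$ where $U\in\mathbb{R}^{D\times M}$ holds the top-$M$ right singular vectors, $[U,\bar U]$ is orthogonal, $\lambda_1$ is the largest singular value and $\bar\lambda_1$ the $(M+1)$-st largest singular value (zero if none). Let $\phi(y,a)$ be twice differentiable in $a$, let $p(\beta)$ be a twice differentiable prior, and consider the exact posterior $\log p(\beta\mid X,Y)=\log p(\beta)+\sum_n\phi(y_n,x_n^\top\beta)+\mathrm{const}$ and the approximate posterior $\log\tilde p(\beta\mid X,Y)=\log p(\beta)+\sum_n\phi(y_n,x_n^\top UU^\top\beta)+\mathrm{const}$, with maximizers $\bar\mu$ and $\hat\mu$ respectively. Assume $-\log p(\beta\mid X,Y)$ is $\alpha$-strongly convex ($\alpha>0$). Then there is $A\in\mathbb{R}^N$ with each $A_n$ lying between $x_n^\top UU^\top\hat\mu$ and $x_n^\top\hat\mu$ such that $$\|\hat\mu-\bar\mu\|_2\le\frac{\bar\lambda_1\big(\|\vec\phi'(Y,X\hat\mu)\|_2+\lambda_1\|\bar U^\top\hat\mu\|_2\,\|\vec\phi''(Y,A)\|_\infty\big)}{\alpha}.$$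
   Context: For $B\in\mathbb{R}^N$, $\vec\phi'(Y,B)$ and $\vec\phi''(Y,B)$ are the vectors with entries $\frac{\partial}{\partial a}\phi(y_n,a)|_{a=B_n}$ and $\frac{\partial^2}{\partial a^2}\phi(y_n,a)|_{a=B_n}$. *)

(* Defs.v *)
From HB Require Import structures.
From Stdlib Require Import Reals.
From mathcomp Require Import all_boot.

Set Implicit Arguments.
Unset Strict Implicit.
Unset Printing Implicit Defensive.

Local Open Scope R_scope.

Lemma Rplus_assoc' : associative Rplus.
Proof. by move=> x y z; rewrite Rplus_assoc. Qed.
Lemma Rplus_comm' : commutative Rplus.
Proof. exact: Rplus_comm. Qed.
Lemma Rplus_0_l' : left_id R0 Rplus.
Proof. exact: Rplus_0_l. Qed.
HB.instance Definition _ := Monoid.isComLaw.Build R R0 Rplus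
  Rplus_assoc' Rplus_comm' Rplus_0_l'.

Definition Rsum (n : nat) (F : 'I_n -> R) : R := \big[Rplus/R0]_(i < n) F i.

Definition vec (n : nat) := 'I_n -> R.
Definition mat (n m : nat) := 'I_n -> 'I_m -> R.

Definition vadd n (u v : vec n) : vec n := fun i => u i + v i.
Definition vsub n (u v : vec n) : vec n := fun i => u i - v i.
Definition vscale n (a : R) (v : vec n) : vec n := fun i => a * v i.
Definition dot n (u v : vec n) : R := Rsum (fun i => u i * v i).
Definition norm2 n (v : vec n) : R := sqrt (Rsum (fun i => v i ^ 2)).
Definition norm_inf n (v : vec n) : R := \big[Rmax/R0]_(i < n) Rabs (v i).

Definition mulmv n m (A : mat n m) (v : vec m) : vec n :=
  fun i => Rsum (fun j => A i j * v j).
Definition mulmtv n m (A : mat n m) (v : vec n) : vec m :=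
  fun j => Rsum (fun i => A i j * v i).

Definition orthogonal n (Q : mat n n) : Prop :=
  forall i j : 'I_n, Rsum (fun k => Q k i * Q k j) = if i == j then 1 else 0.

(* Full SVD of X^T (a D x N matrix):  X^T = W S Z^T,
   W (D x D) and Z (N x N) orthogonal, S rectangular diagonal with diagonal
   entries sigma 0 >= sigma 1 >= ... >= sigma (min D N - 1) >= 0.
   The right singular vectors of X are the columns of W. *)
Definition is_svdT (N D : nat) (X : mat N D) (W : mat D D) (Z : mat N N)
    (sigma : nat -> R) : Prop :=
  orthogonal W /\ orthogonal Z /\
  (forall k, (k < minn D N)%N -> 0 <= sigma k) /\
  (forall k, (k.+1 < minn D N)%N -> sigma k.+1 <= sigma k) /\
  (forall (n : 'I_N) (d : 'I_D),
     X n d = Rsum (fun i : 'I_D => Rsum (fun j : 'I_N =>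
               if nat_of_ord i == nat_of_ord j
               then W d i * sigma i * Z n j else 0))).

Definition lam1 (N D : nat) (sigma : nat -> R) : R :=
  if (0 < minn D N)%N then sigma 0%N else 0.
Definition lambar1 (N D M : nat) (sigma : nat -> R) : R :=
  if (M < minn D N)%N then sigma M else 0.

(* U = first M columns of W, Ubar = remaining D - M columns.
   U U^T beta = sum_{i < M} w_i (w_i . beta). *)
Definition UUt (D M : nat) (W : mat D D) (beta : vec D) : vec D :=
  fun d => Rsum (fun i : 'I_D =>
     if (nat_of_ord i < M)%N then W d i * mulmtv W beta i else 0).
(* Ubar^T beta, written as a vector of R^D padded with zeros in the first
   M coordinates (same Euclidean norm as Ubar^T beta in R^(D-M)). *)
Definition UbarT (D M : nat) (W : mat D D) (beta : vec D) : vec D :=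
  fun i => if (M <= nat_of_ord i)%N then mulmtv W beta i else 0.

Definition has_gradient n (f : vec n -> R) (x g : vec n) : Prop :=
  forall eps, 0 < eps -> exists delta, 0 < delta /\
    forall h : vec n, norm2 h < delta ->
      Rabs (f (vadd x h) - f x - dot g h) <= eps * norm2 h.

Definition twice_differentiable n (f : vec n -> R) : Prop :=
  exists (g : vec n -> vec n) (H : vec n -> 'I_n -> vec n),
    forall x, has_gradient f x (g x) /\
      forall i, has_gradient (fun y => g y i) x (H x i).

Definition strongly_convex n (alpha : R) (f : vec n -> R) : Prop :=
  forall (x y : vec n) (t : R), 0 <= t <= 1 ->
    f (vadd (vscale t x) (vscale (1 - t) y))
      <= t * f x + (1 - t) * f y - alpha / 2 * t * (1 - t) * (norm2 (vsub x y)) ^ 2.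

Definition is_maximizer n (f : vec n -> R) (x : vec n) : Prop :=
  forall y, f y <= f x.

Definition between (a b c : R) : Prop := Rmin b c <= a <= Rmax b c.

Definition log_post (N D : nat) (Ty : Type) (p : vec D -> R)
   (phi : Ty -> R -> R) (X : mat N D) (Y : 'I_N -> Ty) (beta : vec D) : R :=
  ln (p beta) + Rsum (fun n => phi (Y n) (mulmv X beta n)).
Definition approx_log_post (N D M : nat) (Ty : Type) (p : vec D -> R)
   (phi : Ty -> R -> R) (X : mat N D) (W : mat D D) (Y : 'I_N -> Ty)
   (beta : vec D) : R :=
  ln (p beta) + Rsum (fun n => phi (Y n) (mulmv X (UUt M W beta) n)).

(* Main.v *)
Require Import Defs.
From Stdlib Require Import Reals.
From mathcomp Require Import all_boot.
From Stdlib Require Import Lra Psatz ClassicalEpsilon.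

Local Open Scope R_scope.

Lemma Rsum_ext n (F G : 'I_n -> R) : (forall i, F i = G i) -> Rsum F = Rsum G.
Proof. by move=> h; rewrite /Rsum; apply: eq_bigr => i _. Qed.
Arguments Rsum_ext {n F G}.
Lemma Rsum_add n (F G : 'I_n -> R) : Rsum (fun i => F i + G i) = Rsum F + Rsum G.
Proof. by rewrite /Rsum big_split. Qed.
Lemma Rsum_scal n c (F : 'I_n -> R) : Rsum (fun i => c * F i) = c * Rsum F.
Proof.
rewrite /Rsum; symmetry.
apply: (big_morph (fun x => c * x) (id1 := R0) (op1 := Rplus)).
  by move=> x y /=; rewrite Rmult_plus_distr_l.
by rewrite Rmult_0_r.
Qed.
Lemma Rsum_opp n (F : 'I_n -> R) : Rsum (fun i => - F i) = - Rsum F.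
Proof. have -> : Rsum (fun i => - F i) = Rsum (fun i => -1 * F i) by apply: Rsum_ext => i; ring.
by rewrite Rsum_scal; ring. Qed.
Lemma Rsum_sub n (F G : 'I_n -> R) : Rsum (fun i => F i - G i) = Rsum F - Rsum G.
Proof. by rewrite /Rminus Rsum_add Rsum_opp. Qed.
Lemma Rsum_le n (F G : 'I_n -> R) : (forall i, F i <= G i) -> Rsum F <= Rsum G.
Proof.
move=> h; rewrite /Rsum; apply: (big_ind2 (fun x y => x <= y)) => //.
  by apply: Rle_refl.
by move=> *; apply: Rplus_le_compat.
Qed.
Lemma Rsum_ge0 n (F : 'I_n -> R) : (forall i, 0 <= F i) -> 0 <= Rsum F.
Proof.
move=> h; rewrite /Rsum; apply: (big_ind (fun x => 0 <= x)) => //.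
  by apply: Rle_refl.
by move=> *; apply: Rplus_le_le_0_compat.
Qed.
Lemma Rsum_swap n m (F : 'I_n -> 'I_m -> R) :
  Rsum (fun i => Rsum (fun j => F i j)) = Rsum (fun j => Rsum (fun i => F i j)).
Proof. by rewrite /Rsum exchange_big. Qed.
Lemma Rsum_single n (F : 'I_n -> R) (i0 : 'I_n) :
  Rsum (fun i => if nat_of_ord i == nat_of_ord i0 then F i else 0) = F i0.
Proof.
rewrite /Rsum -(big_pred1_eq (Monoid.Law.clone _ _ Rplus _) i0 F) big_mkcond.
by apply: eq_bigr.
Qed.
Lemma Rsum_none n (F : 'I_n -> R) j : (n <= j)%N ->
  Rsum (fun i : 'I_n => if nat_of_ord i == j then F i else 0) = 0.
Proof.
move=> hj; rewrite /Rsum big1 // => i _.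
case: eqP => // e; move: (ltn_ord i); rewrite e => h.
by move: (leq_trans h hj); rewrite ltnn.
Qed.


Lemma Rsum_scalr n c (F : 'I_n -> R) : Rsum (fun i => F i * c) = Rsum F * c.
Proof. rewrite Rmult_comm -Rsum_scal; apply: Rsum_ext => i; ring. Qed.
Lemma sq_sum n (F : 'I_n -> R) :
  (Rsum F) ^ 2 = Rsum (fun i => Rsum (fun j => F i * F j)).
Proof.
rewrite /= Rmult_1_r -Rsum_scalr; apply: Rsum_ext => i.
by rewrite -Rsum_scal.
Qed.
Lemma orth_norm n (Q : mat n n) (c : vec n) : orthogonal Q ->
  Rsum (fun k => (Rsum (fun i => Q k i * c i)) ^ 2) = Rsum (fun i => c i ^ 2).
Proof.
move=> hQ.
rewrite (Rsum_ext (fun k => sq_sum _ _)) Rsum_swap.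
apply: Rsum_ext => i; rewrite Rsum_swap.
rewrite (Rsum_ext (G := fun j => if nat_of_ord j == nat_of_ord i then c i ^ 2 else 0)).
  by rewrite (Rsum_single _ (fun _ => c i ^ 2)).
move=> j.
rewrite (Rsum_ext (G := fun k => c i * c j * (Q k i * Q k j))); last by move=> k; ring.
rewrite Rsum_scal hQ.
have -> : (i == j) = (nat_of_ord j == nat_of_ord i) by rewrite eq_sym.
by case: eqP => [/val_inj -> | _]; ring.
Qed.


Lemma bessel n (W : mat n n) (d : vec n) : orthogonal W ->
  Rsum (fun i => mulmtv W d i ^ 2) <= Rsum (fun k => d k ^ 2).
Proof.
move=> hW.
set w := mulmtv W d.
set v := fun k => Rsum (fun i => W k i * w i).
have h0 : 0 <= Rsum (fun k => (d k - v k) ^ 2).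
  by apply: Rsum_ge0 => k; apply: pow2_ge_0.
have e1 : Rsum (fun k => (d k - v k) ^ 2) =
   Rsum (fun k => d k ^ 2) - 2 * Rsum (fun k => d k * v k) + Rsum (fun k => v k ^ 2).
  rewrite -Rsum_scal -Rsum_sub -Rsum_add; apply: Rsum_ext => k; ring.
have e2 : Rsum (fun k => v k ^ 2) = Rsum (fun i => w i ^ 2) by apply: orth_norm.
have e3 : Rsum (fun k => d k * v k) = Rsum (fun i => w i ^ 2).
  rewrite (Rsum_ext (G := fun k => Rsum (fun i => w i * (W k i * d k)))); last first.
    by move=> k; rewrite /v -Rsum_scal; apply: Rsum_ext => i; ring.
  rewrite Rsum_swap; apply: Rsum_ext => i; rewrite Rsum_scal.
  have -> : Rsum (fun i0 => W i0 i * d i0) = w i by []. ring.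
lra.
Qed.

Lemma cauchy_schwarz n (a b : vec n) :
  Rsum (fun i => a i * b i) <= norm2 a * norm2 b.
Proof.
have key : (Rsum (fun i => a i * b i)) ^ 2 <= Rsum (fun i => a i ^ 2) * Rsum (fun i => b i ^ 2).
  have h0 : 0 <= Rsum (fun i => Rsum (fun j => (a i * b j - a j * b i) ^ 2)).
    by apply: Rsum_ge0 => i; apply: Rsum_ge0 => j; apply: pow2_ge_0.
  have e : Rsum (fun i => Rsum (fun j => (a i * b j - a j * b i) ^ 2)) =
     Rsum (fun i => Rsum (fun j => a i ^ 2 * b j ^ 2))
     + Rsum (fun i => Rsum (fun j => a j ^ 2 * b i ^ 2))
     - 2 * Rsum (fun i => Rsum (fun j => a i * b i * (a j * b j))).
    rewrite -Rsum_scal -Rsum_add -Rsum_sub; apply: Rsum_ext => i.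
    rewrite -Rsum_scal -Rsum_add -Rsum_sub; apply: Rsum_ext => j; ring.
  have e2 : Rsum (fun i => Rsum (fun j => a j ^ 2 * b i ^ 2)) =
            Rsum (fun i => Rsum (fun j => a i ^ 2 * b j ^ 2)) by rewrite Rsum_swap.
  have e3 : Rsum (fun i => Rsum (fun j => a i ^ 2 * b j ^ 2)) =
            Rsum (fun i => a i ^ 2) * Rsum (fun i => b i ^ 2).
    rewrite -Rsum_scalr; apply: Rsum_ext => i; by rewrite Rsum_scal.
  rewrite -sq_sum in e; lra.
have ha : 0 <= Rsum (fun i => a i ^ 2) by apply: Rsum_ge0 => i; apply: pow2_ge_0.
have hb : 0 <= Rsum (fun i => b i ^ 2) by apply: Rsum_ge0 => i; apply: pow2_ge_0.
rewrite /norm2 -sqrt_mult_alt //.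
apply: Rle_trans (Rle_abs _) _.
rewrite -sqrt_Rsqr_abs; apply: sqrt_le_1_alt.
by move: key; rewrite /Rsqr /= Rmult_1_r.
Qed.


Lemma Rsum_zero n : Rsum (fun _ : 'I_n => 0) = 0.
Proof. by rewrite /Rsum big1. Qed.

Definition cc (N D : nat) (sigma : nat -> R) (w : vec D) : vec N :=
  fun j => Rsum (fun i : 'I_D => if nat_of_ord i == nat_of_ord j then sigma i * w i else 0).

Lemma Xv_eq (N D : nat) (X : mat N D) (W : mat D D) (Z : mat N N) (sigma : nat -> R)
  (v : vec D) (n : 'I_N) :
  is_svdT X W Z sigma ->
  mulmv X v n = Rsum (fun j => Z n j * cc N D sigma (mulmtv W v) j).
Proof.
case=> _ [_ [_ [_ hX]]].
pose G := fun (i : 'I_D) (j : 'I_N) (d : 'I_D) =>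
  if nat_of_ord i == nat_of_ord j then W d i * sigma i * Z n j * v d else 0.
transitivity (Rsum (fun i => Rsum (fun j => Rsum (fun d => G i j d)))).
  rewrite /mulmv.
  rewrite (Rsum_ext (G := fun d => Rsum (fun i => Rsum (fun j => G i j d)))); last first.
    move=> d; rewrite hX -Rsum_scalr; apply: Rsum_ext => i; rewrite -Rsum_scalr.
    apply: Rsum_ext => j; rewrite /G; case: eqP => _; ring.
  rewrite Rsum_swap; apply: Rsum_ext => i; by rewrite Rsum_swap.
rewrite [RHS](Rsum_ext (G := fun j => Rsum (fun i => Rsum (fun d => G i j d)))).
  by rewrite Rsum_swap.
move=> j; rewrite /cc -Rsum_scal; apply: Rsum_ext => i.
rewrite /G /mulmtv; case: eqP => _; last by rewrite Rmult_0_r Rsum_zero.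
rewrite -!Rsum_scal; apply: Rsum_ext => d; ring.
Qed.
Arguments Xv_eq {N D X W Z sigma} v n.

Lemma normX2 (N D : nat) (X : mat N D) (W : mat D D) (Z : mat N N) (sigma : nat -> R)
  (v : vec D) : is_svdT X W Z sigma ->
  Rsum (fun n => mulmv X v n ^ 2) =
  Rsum (fun i : 'I_D => if (nat_of_ord i < N)%N then (sigma i * mulmtv W v i) ^ 2 else 0).
Proof.
move=> hs; have hZ : orthogonal Z by case: hs => _ [].
set w := mulmtv W v.
rewrite (Rsum_ext (G := fun n => (Rsum (fun j => Z n j * cc N D sigma w j)) ^ 2)); last first.
  by move=> n; rewrite (Xv_eq v n hs).
rewrite orth_norm //.
pose c := fun i : 'I_D => (sigma i * w i) ^ 2.
rewrite (Rsum_ext (G := fun j : 'I_N => Rsum (fun i : 'I_D =>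
           if nat_of_ord i == nat_of_ord j then c i else 0))); last first.
  move=> j; rewrite /cc; case: (ltnP j D) => hj.
    pose i0 := Ordinal hj.
    have := Rsum_single _ (fun i => sigma i * w i) i0.
    have := Rsum_single _ c i0.
    by rewrite /= => -> ->.
  by rewrite !Rsum_none //= Rmult_0_l.
rewrite Rsum_swap; apply: Rsum_ext => i.
case: (ltnP i N) => hi.
  pose j0 := Ordinal hi.
  transitivity (Rsum (fun j : 'I_N => if nat_of_ord j == nat_of_ord j0 then c i else 0)).
    by apply: Rsum_ext => j; rewrite eq_sym.
  exact: (Rsum_single _ (fun _ => c i) j0).
rewrite (Rsum_ext (G := fun j : 'I_N => if nat_of_ord j == nat_of_ord i then c i else 0)).
  by rewrite Rsum_none.
by move=> j; rewrite eq_sym.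
Qed.


Lemma normX_bound (N D : nat) (X : mat N D) (W : mat D D) (Z : mat N N) (sigma : nat -> R)
  (v g : vec D) (s : R) : is_svdT X W Z sigma -> 0 <= s ->
  (forall i : 'I_D, (nat_of_ord i < N)%N -> (sigma i * mulmtv W v i) ^ 2 <= s ^ 2 * g i ^ 2) ->
  norm2 (mulmv X v) <= s * norm2 g.
Proof.
move=> hs s0 hb; rewrite /norm2 (normX2 _ _ _ _ _ _ v hs).
rewrite -(sqrt_pow2 s s0) -sqrt_mult_alt; last by apply: pow2_ge_0.
apply: sqrt_le_1_alt; rewrite -Rsum_scal; apply: Rsum_le => i.
case: ltnP => hi; first exact: hb.
by apply: Rmult_le_pos; apply: pow2_ge_0.
Qed.
Arguments normX_bound {N D X W Z sigma v g s}.

Lemma mulmv_ext n m (A : mat n m) (f g : vec m) k : (forall i, f i = g i) ->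
  mulmv A f k = mulmv A g k.
Proof. by move=> h; rewrite /mulmv; apply: Rsum_ext => i; rewrite h. Qed.
Lemma mulmv_lin n m (A : mat n m) (x y : vec m) t u k :
  mulmv A (fun i => t * x i + u * y i) k = t * mulmv A x k + u * mulmv A y k.
Proof. rewrite /mulmv -!Rsum_scal -Rsum_add; apply: Rsum_ext => i; ring. Qed.
Lemma mulmv_sub n m (A : mat n m) (x y : vec m) k :
  mulmv A (vsub x y) k = mulmv A x k - mulmv A y k.
Proof. rewrite /mulmv -Rsum_sub; apply: Rsum_ext => i; rewrite /vsub; ring. Qed.
Lemma mulmtv_lin n m (A : mat n m) (x y : vec n) t u k :
  mulmtv A (fun i => t * x i + u * y i) k = t * mulmtv A x k + u * mulmtv A y k.
Proof. rewrite /mulmtv -!Rsum_scal -Rsum_add; apply: Rsum_ext => i; ring. Qed.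
Lemma mulmtv_sub n m (A : mat n m) (x y : vec n) k :
  mulmtv A (vsub x y) k = mulmtv A x k - mulmtv A y k.
Proof. rewrite /mulmtv -Rsum_sub; apply: Rsum_ext => i; rewrite /vsub; ring. Qed.
Lemma UUt_lin D M (W : mat D D) (x y : vec D) t u k :
  UUt M W (fun i => t * x i + u * y i) k = t * UUt M W x k + u * UUt M W y k.
Proof.
rewrite /UUt -!Rsum_scal -Rsum_add; apply: Rsum_ext => i.
case: ifP => _; last ring. rewrite mulmtv_lin; ring.
Qed.
Lemma UUt_sub D M (W : mat D D) (x y : vec D) k :
  UUt M W (vsub x y) k = UUt M W x k - UUt M W y k.
Proof.
rewrite /UUt -Rsum_sub; apply: Rsum_ext => i.
case: ifP => _; last ring. rewrite mulmtv_sub; ring.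
Qed.

Lemma WtUUt D M (W : mat D D) (v : vec D) k : orthogonal W ->
  mulmtv W (UUt M W v) k = if (nat_of_ord k < M)%N then mulmtv W v k else 0.
Proof.
move=> hW; rewrite {1}/mulmtv /UUt.
rewrite (Rsum_ext (G := fun d => Rsum (fun i : 'I_D =>
    if (nat_of_ord i < M)%N then mulmtv W v i * (W d k * W d i) else 0))); last first.
  move=> d; rewrite -Rsum_scal; apply: Rsum_ext => i; case: ifP => _; ring.
rewrite Rsum_swap.
rewrite (Rsum_ext (G := fun i : 'I_D => if nat_of_ord i == nat_of_ord k then
    (if (nat_of_ord k < M)%N then mulmtv W v k else 0) else 0)).
  exact: (Rsum_single _ (fun _ => if (nat_of_ord k < M)%N then mulmtv W v k else 0) k).
move=> i; case: (ltnP i M) => hiM.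
  rewrite Rsum_scal hW; case: eqP => [e | ne].
    by subst k; rewrite eqxx hiM; ring.
  case: eqP => e; last ring.
  by exfalso; apply: ne; apply: val_inj.
have hf : (nat_of_ord i < M)%N = false by rewrite ltnNge hiM.
rewrite /= Rsum_zero.
case: eqP => e //. by move: hiM; rewrite e leqNgt; case: ltnP.
Qed.

Lemma WtUbar D M (W : mat D D) (v : vec D) k : orthogonal W ->
  mulmtv W (vsub v (UUt M W v)) k = UbarT M W v k.
Proof.
move=> hW; rewrite mulmtv_sub WtUUt // /UbarT.
case: ltnP => _; ring.
Qed.
Arguments mulmv_ext {n m}.
Arguments mulmv_lin {n m}.
Arguments mulmv_sub {n m}.
Arguments mulmtv_lin {n m}.
Arguments mulmtv_sub {n m}.
Arguments UUt_lin {D}.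
Arguments UUt_sub {D}.
Arguments WtUUt {D}.
Arguments WtUbar {D}.


Lemma sigma_mono (N D : nat) (X : mat N D) (W : mat D D) (Z : mat N N) (sigma : nat -> R) :
  is_svdT X W Z sigma -> forall k j, (k <= j)%N -> (j < minn D N)%N -> sigma j <= sigma k.
Proof.
case=> _ [_ [_ [hm _]]] k j hkj.
rewrite -(subnKC hkj); elim: (j - k)%N => [|d IH] hj.
  by rewrite addn0; apply: Rle_refl.
rewrite addnS in hj *.
apply: Rle_trans (hm _ hj) _.
apply: IH; exact: ltnW.
Qed.
Arguments sigma_mono {N D X W Z sigma}.

Lemma sq_bound a s w : 0 <= a -> a <= s -> (a * w) ^ 2 <= s ^ 2 * w ^ 2.
Proof.
move=> h1 h2.
have h3 : a * a <= s * s by apply: Rmult_le_compat.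
have h4 : 0 <= w * w by nra.
have : a * a * (w * w) <= s * s * (w * w) by apply: Rmult_le_compat_r.
simpl; lra.
Qed.

Lemma norm2_ge0 n (v : vec n) : 0 <= norm2 v.
Proof. exact: sqrt_pos. Qed.

Lemma lambar_ge0 (N D M : nat) (X : mat N D) (W : mat D D) (Z : mat N N) (sigma : nat -> R) :
  is_svdT X W Z sigma -> 0 <= lambar1 N D M sigma.
Proof. case=> _ [_ [h _]]; rewrite /lambar1; case: ifP => hM; [exact: h | apply: Rle_refl]. Qed.
Arguments lambar_ge0 {N D M X W Z sigma}.
Lemma lam_ge0 (N D : nat) (X : mat N D) (W : mat D D) (Z : mat N N) (sigma : nat -> R) :
  is_svdT X W Z sigma -> 0 <= lam1 N D sigma.
Proof. case=> _ [_ [h _]]; rewrite /lam1; case: ifP => hM; [exact: h | apply: Rle_refl]. Qed.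
Arguments lam_ge0 {N D X W Z sigma}.

Lemma boundB1 (N D M : nat) (X : mat N D) (W : mat D D) (Z : mat N N) (sigma : nat -> R)
  (v : vec D) : is_svdT X W Z sigma ->
  norm2 (mulmv X (vsub v (UUt M W v))) <= lambar1 N D M sigma * norm2 (UbarT M W v).
Proof.
move=> hs; have hW : orthogonal W by case: hs.
have [_ [_ [hpos _]]] := hs.
apply: (normX_bound hs); first exact: lambar_ge0 hs.
move=> i hi; rewrite WtUbar // /UbarT.
case: (leqP M i) => hMi; last by simpl; lra.
have hmin : (nat_of_ord i < minn D N)%N by rewrite leq_min ltn_ord hi.
have hMm : (M < minn D N)%N by apply: leq_ltn_trans hmin.
apply: sq_bound; first exact: hpos.
rewrite /lambar1 hMm; exact: (sigma_mono hs _ _ hMi hmin).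
Qed.

Lemma boundB2 (N D M : nat) (X : mat N D) (W : mat D D) (Z : mat N N) (sigma : nat -> R)
  (v : vec D) : is_svdT X W Z sigma ->
  norm2 (mulmv X (UUt M W v)) <= lam1 N D sigma * norm2 (mulmtv W v).
Proof.
move=> hs; have hW : orthogonal W by case: hs.
have [_ [_ [hpos _]]] := hs.
apply: (normX_bound hs); first exact: lam_ge0 hs.
move=> i hi; rewrite WtUUt //.
have hmin : (nat_of_ord i < minn D N)%N by rewrite leq_min ltn_ord hi.
have h0 : (0 < minn D N)%N by apply: leq_ltn_trans hmin.
case: ifP => _; last first.
  rewrite Rmult_0_r /= Rmult_0_l; apply: Rmult_le_pos; apply: pow2_ge_0.
apply: sq_bound; first exact: hpos.
rewrite /lam1 h0; exact: (sigma_mono hs _ _ (leq0n _) hmin).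
Qed.

Lemma boundB3 D M (W : mat D D) (v : vec D) : orthogonal W ->
  norm2 (UbarT M W v) <= norm2 v /\ norm2 (mulmtv W v) <= norm2 v.
Proof.
move=> hW; have hb := bessel _ _ v hW.
split; apply: sqrt_le_1_alt; last exact: hb.
apply: Rle_trans hb; apply: Rsum_le => i; rewrite /UbarT; case: ifP => _.
  by apply: Rle_refl.
rewrite /= Rmult_0_l; apply: pow2_ge_0.
Qed.


Lemma deriv_ext (f g : R -> R) x l : (forall y, f y = g y) ->
  derivable_pt_lim f x l -> derivable_pt_lim g x l.
Proof.
move=> e h eps he; have [d hd] := h eps he; exists d => h0 hh0 hlt.
by rewrite -!e; apply: hd.
Qed.
Arguments deriv_ext {f g x l}.

Lemma deriv_sum_seq (I : Type) (r : seq I) (F : I -> R -> R) (L : I -> R) x :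
  (forall i, derivable_pt_lim (F i) x (L i)) ->
  derivable_pt_lim (fun s => \big[Rplus/R0]_(i <- r) F i s) x (\big[Rplus/R0]_(i <- r) L i).
Proof.
move=> h; elim: r => [|a r IH].
  rewrite big_nil; apply: (deriv_ext (f := fct_cte 0)).
    by move=> y; rewrite big_nil.
  exact: derivable_pt_lim_const.
rewrite big_cons; apply: (deriv_ext (f := (F a + fun s => \big[Rplus/R0]_(i <- r) F i s)%F)).
  by move=> y; rewrite big_cons.
by apply: derivable_pt_lim_plus.
Qed.

Lemma deriv_sum n (F : 'I_n -> R -> R) (L : 'I_n -> R) x :
  (forall i, derivable_pt_lim (F i) x (L i)) ->
  derivable_pt_lim (fun s => Rsum (fun i => F i s)) x (Rsum L).
Proof. exact: deriv_sum_seq. Qed.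

Lemma deriv_affine (f f' : R -> R) a b : (forall z, derivable_pt_lim f z (f' z)) ->
  derivable_pt_lim (fun s => f (a + s * b)) 0 (f' a * b).
Proof.
move=> hf.
have h1 : derivable_pt_lim (fun s => a + s * b) 0 b.
  move=> eps he; exists (mkposreal 1 Rlt_0_1) => h0 hh0 _.
  have -> : (a + (0 + h0) * b - (a + 0 * b)) / h0 - b = 0 by field.
  by rewrite Rabs_R0.
have := derivable_pt_lim_comp _ _ _ _ _ h1 (hf (a + 0 * b)).
rewrite Rmult_0_l Rplus_0_r; apply: deriv_ext => y; by [].
Qed.

Lemma lim_lemma (r k c : R) : 0 < r -> 0 <= k ->
  (forall s, 0 < s < r -> k - k * s <= c) -> k <= c.
Proof.
move=> hr hk h.
case: (Rle_or_lt k c) => // hc; exfalso.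
have hk0 : 0 < k.
  case: (Rle_lt_or_eq_dec 0 k hk) => // e; rewrite -e in hc h.
  have hr2 : 0 < r / 2 < r by lra.
  have := h (r / 2) hr2; rewrite Rmult_0_l; lra.
have hs0 : 0 < Rmin (r / 2) ((k - c) / (2 * k)).
  apply: Rmin_glb_lt; first lra.
  apply: Rdiv_lt_0_compat; lra.
have hs1 := Rmin_l (r / 2) ((k - c) / (2 * k)).
have hs2 := Rmin_r (r / 2) ((k - c) / (2 * k)).
move: hs0 hs1 hs2; move: (Rmin _ _) => s hs0 hs1 hs2.
have hsr : 0 < s < r by lra.
have := h s hsr.
have : k * s <= (k - c) / 2.
  have -> : (k - c) / 2 = k * ((k - c) / (2 * k)) by field; lra.
  by apply: Rmult_le_compat_l; lra.
lra.
Qed.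

Lemma mvt_between (f f' : R -> R) (c a : R) : (forall z, derivable_pt_lim f z (f' z)) ->
  exists A, between A c a /\ f a - f c = f' A * (a - c).
Proof.
move=> hf; case: (Rtotal_order c a) => [lt|[eq|gt]].
- have [A [e hA]] := MVT_cor2 f f' c a lt (fun z _ => hf z).
  exists A; split=> //; rewrite /between Rmin_left ?Rmax_right; lra.
- exists a; subst; split; last ring.
  rewrite /between Rmin_left ?Rmax_right; lra.
- have [A [e hA]] := MVT_cor2 f f' a c gt (fun z _ => hf z).
  exists A; split; last lra.
  rewrite /between Rmin_right ?Rmax_left; lra.
Qed.

Lemma norminf_ge n (F : 'I_n -> R) (i : 'I_n) : Rabs (F i) <= norm_inf F.
Proof.
rewrite /norm_inf.
have : i \in index_enum 'I_n by rewrite mem_index_enum.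
elim: (index_enum 'I_n) => [|a r IH] //=.
rewrite big_cons inE; case/orP => [/eqP <- | hr].
  by apply: Rmax_l.
apply: Rle_trans (IH hr) (Rmax_r _ _).
Qed.

Lemma norminf_ge0 n (F : 'I_n -> R) : 0 <= norm_inf F.
Proof.
rewrite /norm_inf; apply: (big_ind (fun x => 0 <= x)); first exact: Rle_refl.
  by move=> x y hx _; apply: Rle_trans hx (Rmax_l _ _).
by move=> i _; apply: Rabs_pos.
Qed.


Theorem mainTheorem10
  (N D M : nat) (X : mat N D) (W : mat D D) (Z : mat N N) (sigma : nat -> R)
  (Ty : Type) (Y : 'I_N -> Ty)
  (phi dphi ddphi : Ty -> R -> R) (p : vec D -> R)
  (alpha : R) (mubar muhat : vec D) :
  (M <= D)%N ->
  is_svdT X W Z sigma ->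
  (forall y a, derivable_pt_lim (phi y) a (dphi y a)) ->
  (forall y a, derivable_pt_lim (dphi y) a (ddphi y a)) ->
  (forall beta, 0 < p beta) ->
  twice_differentiable p ->
  0 < alpha ->
  strongly_convex alpha (fun beta => - log_post p phi X Y beta) ->
  is_maximizer (log_post p phi X Y) mubar ->
  is_maximizer (approx_log_post M p phi X W Y) muhat ->
  exists A : vec N,
    (forall n, between (A n) (mulmv X (UUt M W muhat) n) (mulmv X muhat n)) /\
    norm2 (vsub muhat mubar) <=
      lambar1 N D M sigma *
        (norm2 (fun n => dphi (Y n) (mulmv X muhat n))
         + lam1 N D sigma * norm2 (UbarT M W muhat)
             * norm_inf (fun n => ddphi (Y n) (A n))) / alpha.
Proof.
move=> hMD hs hphi hdphi hp _ ha hsc hmax hmaxt.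
have hW : orthogonal W by case: hs.
set g := log_post p phi X Y.
set gt := approx_log_post M p phi X W Y.
pose Hf := fun beta : vec D =>
  Rsum (fun n => phi (Y n) (mulmv X beta n)) - Rsum (fun n => phi (Y n) (mulmv X (UUt M W beta) n)).
have gsplit : forall beta, g beta = gt beta + Hf beta.
  by move=> beta; rewrite /g /gt /Hf /log_post /approx_log_post; ring.
set n2 := norm2 (vsub muhat mubar).
have n2s : norm2 (vsub mubar muhat) = n2.
  rewrite /n2 /norm2; f_equal; apply: Rsum_ext => i; rewrite /vsub; ring.
have n20 : 0 <= n2 by apply: norm2_ge0.
have step1 : alpha / 2 * n2 ^ 2 <= g mubar - g muhat.
  apply: (lim_lemma 1); first lra.
    by apply: Rmult_le_pos; [lra | apply: pow2_ge_0].
  move=> s hs01.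
  have h1 := hsc muhat mubar s (conj (Rlt_le _ _ (proj1 hs01)) (Rlt_le _ _ (proj2 hs01))).
  have h2 := hmax (vadd (vscale s muhat) (vscale (1 - s) mubar)).
  rewrite -/g -/n2 in h1 h2.
  have : s * (alpha / 2 * n2 ^ 2 - alpha / 2 * n2 ^ 2 * s) <= s * (g mubar - g muhat).
    have -> : s * (alpha / 2 * n2 ^ 2 - alpha / 2 * n2 ^ 2 * s) = alpha / 2 * s * (1 - s) * n2 ^ 2 by ring.
    lra.
  apply: Rmult_le_reg_l; lra.
pose a := fun n => mulmv X muhat n.
pose b := fun n => mulmv X mubar n - mulmv X muhat n.
pose c := fun n => mulmv X (UUt M W muhat) n.
pose e := fun n => mulmv X (UUt M W mubar) n - mulmv X (UUt M W muhat) n.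
pose kfun := fun s => Rsum (fun n => phi (Y n) (a n + s * b n))
                      - Rsum (fun n => phi (Y n) (c n + s * e n)).
pose gam := fun s => vadd (vscale s mubar) (vscale (1 - s) muhat).
have kf : forall s, Hf (gam s) = kfun s.
  move=> s; rewrite /Hf /kfun; congr (_ - _); apply: Rsum_ext => n; f_equal.
    rewrite /gam (mulmv_lin X mubar muhat s (1 - s) n) /a /b; ring.
  rewrite (mulmv_ext X _ (fun k => s * UUt M W mubar k + (1 - s) * UUt M W muhat k)).
    rewrite mulmv_lin /c /e; ring.
  by move=> k; rewrite /gam (UUt_lin M W mubar muhat s (1 - s) k).
have kf0 : Hf muhat = kfun 0.
  rewrite /Hf /kfun; congr (_ - _); apply: Rsum_ext => n; f_equal;
    rewrite Rmult_0_l Rplus_0_r //.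
pose Dv := Rsum (fun n => dphi (Y n) (a n) * b n) - Rsum (fun n => dphi (Y n) (c n) * e n).
have hder : derivable_pt_lim kfun 0 Dv.
  have H1 : derivable_pt_lim (fun s => Rsum (fun n => phi (Y n) (a n + s * b n))) 0
              (Rsum (fun n => dphi (Y n) (a n) * b n)).
    apply: deriv_sum => n; apply: deriv_affine => z; exact: hphi.
  have H2 : derivable_pt_lim (fun s => Rsum (fun n => phi (Y n) (c n + s * e n))) 0
              (Rsum (fun n => dphi (Y n) (c n) * e n)).
    apply: deriv_sum => n; apply: deriv_affine => z; exact: hphi.
  have H3 := derivable_pt_lim_minus _ _ _ _ _ H1 H2.
  exact: (deriv_ext (fun y => erefl) H3).
set K := alpha * n2 ^ 2.
have step2 : forall s, 0 < s < 1 -> s * (K - K * s / 2) <= kfun s - kfun 0.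
  move=> s hs01.
  have h1 := hsc mubar muhat s (conj (Rlt_le _ _ (proj1 hs01)) (Rlt_le _ _ (proj2 hs01))).
  have h2 := hmaxt (gam s).
  rewrite -/g n2s in h1; rewrite -/gt in h2.
  have h3 := gsplit (gam s). have h4 := gsplit muhat.
  rewrite kf in h3; rewrite kf0 in h4.
  have h5 : s * (alpha / 2 * n2 ^ 2) <= s * (g mubar - g muhat).
    apply: Rmult_le_compat_l; lra.
  rewrite /gam in h3 h2. rewrite /K.
  have -> : s * (alpha * n2 ^ 2 - alpha * n2 ^ 2 * s / 2) =
     s * (alpha / 2 * n2 ^ 2) + alpha / 2 * s * (1 - s) * n2 ^ 2 by field.
  lra.
have step3 : K <= Dv.
  apply: Rle_plus_epsilon => eps heps.
  have [del hdel] := hder eps heps.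
  have hr : 0 < Rmin 1 del / 2.
    have : 0 < Rmin 1 del by apply: Rmin_glb_lt; [lra | exact: cond_pos].
    lra.
  apply: (lim_lemma _ _ _ hr).
    by apply: Rmult_le_pos; [lra | apply: pow2_ge_0].
  move=> t ht.
  have hm1 := Rmin_l 1 del. have hm2 := Rmin_r 1 del.
  have hs01 : 0 < 2 * t < 1 by lra.
  have hq := hdel (2 * t) ltac:(lra) ltac:(rewrite Rabs_right; lra).
  rewrite Rplus_0_l in hq.
  have hq2 := Rabs_def2 _ _ hq.
  have h := step2 (2 * t) hs01.
  have : K - K * t <= (kfun (2 * t) - kfun 0) / (2 * t).
    apply: (Rmult_le_reg_l (2 * t)); first lra.
    have -> : 2 * t * ((kfun (2 * t) - kfun 0) / (2 * t)) = kfun (2 * t) - kfun 0 by field; lra.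
    have -> : 2 * t * (K - K * t) = 2 * t * (K - K * (2 * t) / 2) by field.
    exact: h.
  lra.
have hex : forall n, exists An, between An (c n) (a n) /\
    dphi (Y n) (a n) - dphi (Y n) (c n) = ddphi (Y n) An * (a n - c n).
  by move=> n; apply: mvt_between; exact: hdphi.
pose A := fun n => proj1_sig (constructive_indefinite_description _ (hex n)).
have hA : forall n, between (A n) (c n) (a n) /\
    dphi (Y n) (a n) - dphi (Y n) (c n) = ddphi (Y n) (A n) * (a n - c n).
  move=> n; exact: (proj2_sig (constructive_indefinite_description _ (hex n))).
exists A; split; first by move=> n; exact: (proj1 (hA n)).
set d := vsub mubar muhat.
pose u1 := mulmv X (vsub d (UUt M W d)).
pose u2 := mulmv X (vsub muhat (UUt M W muhat)).
pose u3 := mulmv X (UUt M W d).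
have eu3 : forall n, u3 n = e n.
  move=> n; rewrite /u3 (mulmv_ext X _ (vsub (UUt M W mubar) (UUt M W muhat))).
    by rewrite mulmv_sub.
  by move=> k; rewrite /d UUt_sub.
have eu1 : forall n, u1 n = b n - e n.
  by move=> n; rewrite /u1 mulmv_sub -/(u3 n) eu3 /d mulmv_sub.
have eu2 : forall n, u2 n = a n - c n by move=> n; rewrite /u2 mulmv_sub.
pose Pf := fun n => dphi (Y n) (mulmv X muhat n).
pose Ni := norm_inf (fun n => ddphi (Y n) (A n)).
have eDv : Dv = Rsum (fun n => Pf n * u1 n) + Rsum (fun n => ddphi (Y n) (A n) * u2 n * u3 n).
  rewrite /Dv -Rsum_sub -Rsum_add; apply: Rsum_ext => n.
  rewrite eu1 eu2 eu3 /Pf -/(a n).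
  have := proj2 (hA n); nra.
have T1 : Rsum (fun n => Pf n * u1 n) <= norm2 Pf * norm2 u1 by apply: cauchy_schwarz.
have T2 : Rsum (fun n => ddphi (Y n) (A n) * u2 n * u3 n) <= Ni * (norm2 u2 * norm2 u3).
  apply: Rle_trans (_ : Rsum (fun n => Ni * (Rabs (u2 n) * Rabs (u3 n))) <= _).
    apply: Rsum_le => n.
    apply: Rle_trans (Rle_abs _) _.
    rewrite !Rabs_mult Rmult_assoc.
    apply: Rmult_le_compat_r; first by apply: Rmult_le_pos; apply: Rabs_pos.
    exact: (norminf_ge _ (fun n => ddphi (Y n) (A n)) n).
  rewrite Rsum_scal; apply: Rmult_le_compat_l.
    exact: norminf_ge0.
  have := cauchy_schwarz _ (fun n => Rabs (u2 n)) (fun n => Rabs (u3 n)).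
  have -> : norm2 (fun n => Rabs (u2 n)) = norm2 u2.
    by rewrite /norm2; f_equal; apply: Rsum_ext => n; rewrite pow2_abs.
  have -> : norm2 (fun n => Rabs (u3 n)) = norm2 u3.
    by rewrite /norm2; f_equal; apply: Rsum_ext => n; rewrite pow2_abs.
  by [].
have B1 := boundB1 _ _ M _ _ _ _ d hs.
have B2 := boundB1 _ _ M _ _ _ _ muhat hs.
have B3 := boundB2 _ _ M _ _ _ _ d hs.
have [B4 B5] := boundB3 _ M W d hW.
rewrite n2s in B4 B5.
rewrite -/u1 in B1; rewrite -/u2 in B2; rewrite -/u3 in B3.
have lb0 := lambar_ge0 (M := M) hs.
have l10 := lam_ge0 hs.
have P0 := norm2_ge0 _ Pf.
have Ni0 : 0 <= Ni by apply: norminf_ge0.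
have U0 := norm2_ge0 _ (UbarT M W muhat).
have nu10 := norm2_ge0 _ u1. have nu20 := norm2_ge0 _ u2. have nu30 := norm2_ge0 _ u3.
set lb := lambar1 N D M sigma in B1 B2 lb0 *.
set l1 := lam1 N D sigma in B3 l10 *.
set U := norm2 (UbarT M W muhat) in B2 U0 *.
have C1 : norm2 u1 <= lb * n2.
  apply: Rle_trans B1 _; apply: Rmult_le_compat_l => //.
have C3 : norm2 u3 <= l1 * n2.
  apply: Rle_trans B3 _; apply: Rmult_le_compat_l => //.
have D1 : norm2 Pf * norm2 u1 <= norm2 Pf * (lb * n2) by apply: Rmult_le_compat_l.
have D2 : norm2 u2 * norm2 u3 <= (lb * U) * (l1 * n2).
  apply: Rmult_le_compat => //.
have D3 : Ni * (norm2 u2 * norm2 u3) <= Ni * ((lb * U) * (l1 * n2)).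
  by apply: Rmult_le_compat_l.
have fin : alpha * n2 ^ 2 <= lb * (norm2 Pf + l1 * U * Ni) * n2.
  have -> : lb * (norm2 Pf + l1 * U * Ni) * n2 =
     norm2 Pf * (lb * n2) + Ni * ((lb * U) * (l1 * n2)) by ring.
  rewrite -/K; lra.
have Kb0 : 0 <= lb * (norm2 Pf + l1 * U * Ni).
  apply: Rmult_le_pos => //; apply: Rplus_le_le_0_compat => //.
  by apply: Rmult_le_pos => //; apply: Rmult_le_pos.
rewrite /Rdiv; apply: (Rmult_le_reg_l alpha) => //.
rewrite (Rmult_comm (lb * _)) -Rmult_assoc Rinv_r ?Rmult_1_l; last lra.
case: (Rle_lt_or_eq_dec 0 n2 n20) => hn2; last by rewrite -hn2 Rmult_0_r.
apply: (Rmult_le_reg_r n2) => //.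
rewrite -/Pf -/Ni; move: fin; rewrite /= Rmult_1_r; lra.
Qed.
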